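(* Let $(\Omega,\mathcal F)$ be a measurable space with $\Sigma\neq\emptyset$, $\nu$ a finite measure on it, and $\mu$ a finite measure with $\mu\ll\nu$. Let $F_\mu(y)=\nu(\{\omega: \frac{d\mu}{d\nu}(\omega)\le y\})$ for $y\ge0$ and $v_\mu(A)=\int_0^\infty\min(\nu(\Omega)-F_\mu(z),\nu(A))\,dz$ for $A\in\mathcal F$. Then: (1) $v_\mu$ is non-decreasing, continuous, submodular, and $v_\mu(\emptyset)=0$; (2) $v_\mu(\{\omega:\frac{d\mu}{d\nu}(\omega)>y\})=\mu(\{\omega:\frac{d\mu}{d\nu}(\omega)>y\})$ for all $y\ge0$; (3) for every non-negative measurable $f:\Omega\to[0,\infty)$, with $v_\mu(f)=\int_0^\infty v_\mu(\{\omega: f(\omega)>z\})\,dz$, $$v_\mu(f)\ge\sup\Big\{\int_\Omega f\,d\mu'\ \Big|\ \mu'\text{ a finite measure},\ \mu'\ll\nu,\ F_{\mu'}=F_\mu\Big\};$$ in particular $v_\mu(A)\ge\sup\{\mu'(A)\mid \mu'\text{ finite measure},\ \mu'\ll\nu,\ F_{\mu'}=F_\mu\}$ for all $A\in\mathcal F$.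
   Context: $\Sigma$ denotes the set of all classes $\mathcal I\subset\mathcal F$ that are chains (totally ordered by inclusion), contain $\emptyset$ and $\Omega$, and generate $\mathcal F$ as a $\sigma$-algebra. $\frac{d\mu}{d\nu}$ is the (non-negative) Radon–Nikodym derivative. $v$ is non-decreasing if $v(A)\le v(B)$ for $A\subset B$; submodular if $v(A)+v(B)\ge v(A\cup B)+v(A\cap B)$. For $\mathcal I\in\Sigma$ let $\mathcal J$ be the algebra generated by $\mathcal I$, whose elements are the sets $\bigcup_{i=1}^n (C_i\cap D_i^c)$ with $C_1\supset D_1\supset\cdots\supset C_n\supset D_n$ in $\mathcal I$; define $\mu_{v,\mathcal I}(\bigcup_{i=1}^n (C_i\cap D_i^c))=\sum_{i=1}^n(v(C_i)-v(D_i))$. A non-decreasing $v$ is continuous if for every $\mathcal I\in\Sigma$ this $\mu_{v,\mathcal I}$ is $\sigma$-additive on $\mathcal J$. $F_{\mu'}$ is defined from $\mu'$ in the same way as $F_\mu$. *)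

(* Defs.v *)
From HB Require Import structures.
From mathcomp Require Import all_boot all_order all_algebra.
From mathcomp Require Import all_classical all_reals all_analysis.
Set Implicit Arguments. Unset Strict Implicit. Unset Printing Implicit Defensive.
Import Order.TTheory GRing.Theory Num.Theory.
Local Open Scope classical_set_scope.
Local Open Scope ring_scope.
Local Open Scope ereal_scope.

Section defs.
Context d (T : measurableType d) (R : realType).

Definition chain_class (I : set (set T)) : Prop :=
  [/\ I `<=` measurable,
      (forall A B, I A -> I B -> A `<=` B \/ B `<=` A),
      I set0, I setT &
      <<s I >> = measurable].

(* A \in J(I) with representation C_0 ⊇ D_0 ⊇ C_1 ⊇ ... ⊇ D_{n-1} in I *)
Definition chain_repr (I : set (set T)) (n : nat) (C D : nat -> set T) : Prop :=
  (forall i, (i < n)%N -> I (C i) /\ I (D i) /\ D i `<=` C i) /\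
  (forall i, (i.+1 < n)%N -> C i.+1 `<=` D i).

Definition chain_union (n : nat) (C D : nat -> set T) : set T :=
  \bigcup_(i in [set i | (i < n)%N]) (C i `&` ~` D i).

Definition chain_algebra (I : set (set T)) : set (set T) :=
  [set A | exists n C D, chain_repr I n C D /\ A = chain_union n C D].

Definition is_mu_v_I (v : set T -> \bar R) (I : set (set T))
    (m : set T -> \bar R) : Prop :=
  forall n C D, chain_repr I n C D ->
    m (chain_union n C D) = \sum_(0 <= i < n) (v (C i) - v (D i)).

Definition sigma_additive_on (J : set (set T)) (m : set T -> \bar R) : Prop :=
  forall A : (set T)^nat, (forall k, J (A k)) -> trivIset setT A ->
    J (\bigcup_k A k) ->
    (fun n => \sum_(0 <= k < n) m (A k)) @ \oo --> m (\bigcup_k A k).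

Definition nondecreasing_sf (v : set T -> \bar R) : Prop :=
  forall A B, measurable A -> measurable B -> A `<=` B -> v A <= v B.

Definition submodular_sf (v : set T -> \bar R) : Prop :=
  forall A B, measurable A -> measurable B ->
    v (A `|` B) + v (A `&` B) <= v A + v B.

Definition continuous_sf (v : set T -> \bar R) : Prop :=
  forall I, chain_class I ->
    exists m, is_mu_v_I v I m /\ sigma_additive_on (chain_algebra I) m.

Definition RN (nu mu : {finite_measure set T -> \bar R}) : T -> \bar R :=
  Radon_Nikodym_SigmaFinite.f mu nu.

Definition Fdist (nu mu : {finite_measure set T -> \bar R}) (y : R) : \bar R :=
  nu [set w | RN nu mu w <= y%:E].

Definition v_mu (nu mu : {finite_measure set T -> \bar R}) (A : set T) : \bar R :=
  \int[lebesgue_measure]_(z in `[0%R, +oo[%classic)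
     mine (nu setT - Fdist nu mu z) (nu A).

Definition choquet (v : set T -> \bar R) (f : T -> R) : \bar R :=
  \int[lebesgue_measure]_(z in `[0%R, +oo[%classic) v [set w | (z < f w)%R].

End defs.

(* Main.v *)
Require Import Defs.
From HB Require Import structures.
From mathcomp Require Import all_boot all_order all_algebra.
From mathcomp Require Import all_classical all_reals all_analysis.
From mathcomp Require Import measurable_realfun.
From mathcomp Require Import lra.
Set Implicit Arguments. Unset Strict Implicit. Unset Printing Implicit Defensive.
Import Order.TTheory GRing.Theory Num.Theory.
Local Open Scope classical_set_scope.
Local Open Scope ring_scope.
Local Open Scope ereal_scope.
Section layer.
Context d (T : measurableType d) (R : realType).

Lemma layer_cake (M : {finite_measure set T -> \bar R}) (A : set T)
  (mA : measurable A) (f : T -> R) (mf : measurable_fun setT f)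
  (f0 : forall w, (0 <= f w)%R) :
  \int[M]_(w in A) (f w)%:E =
  \int[@lebesgue_measure R]_(z in `[0%R, +oo[%classic) M (A `&` [set w | (z < f w)%R]).
Proof.
pose S := (A `*` `[0%R, +oo[%classic) `&` [set p : T * R | (p.2 < f p.1)%R].
have mS : measurable S.
  apply: measurableI; first by apply: measurableX => //.
  have : measurable_fun setT (fun p : T * R => (p.2 < f p.1)%R).
    apply: measurable_fun_ltr; first exact: measurable_snd.
    exact: measurableT_comp mf measurable_fst.
  move=> /(_ measurableT [set true]); rewrite setTI.
  by apply; [].
have := @fubini_tonelli _ _ T _ R M (@lebesgue_measure R) (fun p => (\1_S p)%:E).
move=> /(_ _ _) E; rewrite [LHS]integral_mkcond [RHS]integral_mkcond.
have {E} := E ((measurable_EFinP _ _).2 (measurable_indic mS)).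
have i0 : forall p, (0 : \bar R) <= ((\1_S p : R))%:E by move=> p; rewrite lee_fin indicE ler0n.
move=> /(_ i0) /= E.
transitivity (\int[M]_x \int[@lebesgue_measure R]_y (\1_S (x, y) : R)%:E).
  apply: eq_integral => x _.
  rewrite (_ : (fun y => (\1_S (x, y) : R)%:E) = (fun y => (\1_[set y | S (x, y)] y : R)%:E)) //.
  rewrite integral_indic //=; last first.
    by have := pair1_measurable x measurableT mS; rewrite setTI.
  rewrite setIT patchE.
  case: ifPn => [/set_mem Ax|/negP Ax].
    rewrite (_ : [set y | S (x, y)] = `[0%R, f x[%classic).
      rewrite lebesgue_measure_itv /= lte_fin.
      case: ifPn => [_|]; first by rewrite ?EFinN ?oppe0 ?adde0 ?sube0 ?subr0.
      by rewrite -leNgt => fx; apply/eqP; rewrite eq_le !lee_fin fx f0.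
    apply/seteqP; split => y /=; rewrite /S /=.
      by case=> -[_]; rewrite !in_itv /= ?andbT => y0 yf; rewrite y0 yf.
    by rewrite !in_itv /= ?andbT => /andP[y0 yf]; split => //; split => //; rewrite in_itv /= y0.
  rewrite (_ : [set y | S (x, y)] = set0) ?measure0 //.
  apply/seteqP; split => y //=.
  by rewrite /S /= => -[[/mem_set]].
rewrite E.
apply: eq_integral => y _.
rewrite (_ : (fun x => (\1_S (x, y) : R)%:E) = (fun x => (\1_[set x | S (x, y)] x : R)%:E)) //.
rewrite integral_indic //=; last first.
  by have := pair2_measurable y measurableT mS; rewrite setTI.
rewrite setIT patchE.
case: ifPn => [/set_mem y0|/negP y0].
  congr (M _); apply/seteqP; split => x /=; rewrite /S /=.
    by case=> -[].
  by case=> Ax yf; split.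
rewrite (_ : [set x | S (x, y)] = set0) ?measure0 //.
apply/seteqP; split => x //=.
by rewrite /S /= => -[[_ /mem_set]].
Qed.
End layer.
Lemma mono_emeas (R : realType) (D : set R) (mD : measurable D) (h : R -> R) :
  {homo h : x y / (x <= y)%R >-> (y <= x)%R} ->
  measurable_fun D (fun x => (h x)%:E).
Proof. by move=> hn; apply/(measurable_EFinP D h); exact: nonincreasing_measurable. Qed.

Lemma min_concave (R : realType) (g a b p q : R) :
  (q <= a)%R -> (q <= b)%R -> (p + q = a + b)%R ->
  (Num.min g p + Num.min g q <= Num.min g a + Num.min g b)%R.
Proof.
move=> qa qb pq.
have [h1|h1] := leP g p; rewrite ?(min_l h1) ?(min_r (ltW h1));
have [h2|h2] := leP g q; rewrite ?(min_l h2) ?(min_r (ltW h2));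
have [h3|h3] := leP g a; rewrite ?(min_l h3) ?(min_r (ltW h3));
have [h4|h4] := leP g b; rewrite ?(min_l h4) ?(min_r (ltW h4)); lra.
Qed.

Section main.
Context d (T : measurableType d) (R : realType).
Variables (nu mu : {finite_measure set T -> \bar R}).
Hypothesis numu : mu `<< nu.

Local Notation Leb := (@lebesgue_measure R).

Definition rn w : R := fine (RN nu mu w).

Lemma RNE w : RN nu mu w = (rn w)%:E.
Proof. by rewrite /rn fineK //; exact: (Radon_Nikodym_SigmaFinite.f_fin_num numu). Qed.

Lemma rn_ge0 w : (0 <= rn w)%R.
Proof. by rewrite /rn fine_ge0 //; exact: (Radon_Nikodym_SigmaFinite.f_ge0 numu). Qed.

Lemma mrn : measurable_fun setT rn.
Proof.
apply: measurableT_comp => //.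
exact: measurable_int (Radon_Nikodym_SigmaFinite.f_integrable numu).
Qed.

Lemma mlt (z : R) : measurable [set w | (z < rn w)%R].
Proof. by have := mrn measurableT (measurable_itv `]z, +oo[); rewrite setTI preimage_itvoy. Qed.

Lemma mu_layer A : measurable A ->
  mu A = \int[Leb]_(z in `[0%R, +oo[%classic) nu (A `&` [set w | (z < rn w)%R]).
Proof.
move=> mA; rewrite (Radon_Nikodym_SigmaFinite.f_integral numu) //.
rewrite -layer_cake //; try exact: mrn; try exact: rn_ge0.
by apply: eq_integral => w _; rewrite -RNE.
Qed.

Definition gr (z : R) : R := fine (nu [set w | (z < rn w)%R]).

Lemma gE z : nu [set w | (z < rn w)%R] = (gr z)%:E.
Proof. by rewrite /gr fineK // fin_num_measure //; exact: mlt. Qed.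

Lemma gr_ge0 z : (0 <= gr z)%R.
Proof. by rewrite /gr fine_ge0. Qed.

Lemma gr_ni : {homo gr : x y / (x <= y)%R >-> (y <= x)%R}.
Proof.
move=> x y xy; rewrite -lee_fin -!gE le_measure // ?inE; try exact: mlt.
by move=> w /=; apply: le_lt_trans xy.
Qed.

Lemma Fdist_gE z : nu setT - Fdist nu mu z = (gr z)%:E.
Proof.
rewrite -gE /Fdist.
have mB : measurable [set w | RN nu mu w <= z%:E].
  rewrite (_ : [set w | _] = ~` [set w | (z < rn w)%R]); first exact/measurableC/mlt.
  by apply/seteqP; split => w /=; rewrite RNE lee_fin leNgt => /negP.
rewrite (_ : [set w | (z < rn w)%R] = setT `\` [set w | RN nu mu w <= z%:E]).
  rewrite measureD // ?setTI //.
  by rewrite -ge0_fin_numE // fin_num_measure.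
apply/seteqP; split => w /=; rewrite RNE lee_fin.
  by move=> zw; split => //; apply/negP; rewrite -ltNge.
by case=> _ /negP; rewrite -ltNge.
Qed.

Lemma int_gr : \int[Leb]_(z in `[0%R, +oo[%classic) (gr z)%:E = mu setT.
Proof. by rewrite mu_layer //; apply: eq_integral => z _; rewrite setTI gE. Qed.

Definition phi (t : R) := \int[Leb]_(z in `[0%R, +oo[%classic) (Num.min (gr z) t)%:E.

Lemma mmin (t : R) : measurable_fun (`[0%R, +oo[%classic : set R) (fun z => (Num.min (gr z) t)%:E).
Proof.
apply: mono_emeas => // x y xy.
by rewrite le_min !ge_min (gr_ni xy) lexx !orbT.
Qed.

Lemma mgr : measurable_fun (`[0%R, +oo[%classic : set R) (fun z => (gr z)%:E).
Proof. exact: mono_emeas gr_ni. Qed.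

Lemma vE A : measurable A -> v_mu nu mu A = phi (fine (nu A)).
Proof.
move=> mA; rewrite /v_mu /phi; apply: eq_integral => z _.
rewrite Fdist_gE EFin_min; congr mine.
by rewrite fineK //; exact: (fin_num_measure nu A mA).
Qed.

Lemma phi_ge0 t : (0 <= t)%R -> 0 <= phi t.
Proof.
move=> t0; apply: integral_ge0 => z _.
by rewrite lee_fin le_min gr_ge0 t0.
Qed.

Lemma phi_le_mu t : (0 <= t)%R -> phi t <= mu setT.
Proof.
move=> t0; rewrite -int_gr; apply: ge0_le_integral => //.
- by move=> z _; rewrite lee_fin le_min gr_ge0 t0.
- exact: mmin.
- exact: mgr.
- by move=> z _; rewrite lee_fin ge_min lexx.
Qed.

Lemma phi_fin t : (0 <= t)%R -> phi t \is a fin_num.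
Proof.
move=> t0; rewrite ge0_fin_numE; last exact: phi_ge0.
have h := phi_le_mu t0.
have h2 : mu setT < +oo by rewrite -ge0_fin_numE //; exact: fin_num_measure.
exact: le_lt_trans h h2.
Qed.

Lemma phi_mono t1 t2 : (0 <= t1)%R -> (t1 <= t2)%R -> phi t1 <= phi t2.
Proof.
move=> t0 t12; apply: ge0_le_integral => //.
- by move=> z _; rewrite lee_fin le_min gr_ge0 t0.
- exact: mmin.
- exact: mmin.
- by move=> z _; rewrite lee_fin le_min !ge_min lexx /= t12 !orbT.
Qed.

Lemma phi0 : phi 0 = 0.
Proof.
rewrite /phi (eq_integral (cst 0)) ?integral0 // => z _.
by rewrite min_r ?gr_ge0.
Qed.

Lemma part2 y : (0 <= y)%R ->
  v_mu nu mu [set w | y%:E < RN nu mu w] = mu [set w | y%:E < RN nu mu w].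
Proof.
move=> y0.
have -> : [set w | y%:E < RN nu mu w] = [set w | (y < rn w)%R].
  by apply/seteqP; split => w /=; rewrite RNE lte_fin.
rewrite vE; last exact: mlt.
rewrite gE /= mu_layer; last exact: mlt.
apply: eq_integral => z _.
have -> : [set w | (y < rn w)%R] `&` [set w | (z < rn w)%R] = [set w | (Num.max y z < rn w)%R].
  apply/seteqP; split => w /=; rewrite gt_max.
    by case=> -> ->.
  by case/andP => -> ->.
rewrite gE; congr EFin.
have [yz|zy] := leP y z.
  by rewrite min_l // gr_ni.
by rewrite min_r // gr_ni // ltW.
Qed.

Lemma v_nondecr : nondecreasing_sf (v_mu nu mu).
Proof.
move=> A B mA mB AB; rewrite !vE //; apply: phi_mono; first exact: fine_ge0.
by apply: fine_le; rewrite ?fin_num_measure //; apply: le_measure; rewrite ?inE.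
Qed.

Lemma v_set0 : v_mu nu mu set0 = 0.
Proof. by rewrite vE // measure0 /= phi0. Qed.

Lemma min_ge0 z t : (0 <= t)%R -> 0 <= ((Num.min (gr z) t)%:E : \bar R).
Proof. by move=> t0; rewrite lee_fin le_min gr_ge0 t0. Qed.

Lemma v_submod : submodular_sf (v_mu nu mu).
Proof.
move=> A B mA mB.
have mU : measurable (A `|` B) by exact: measurableU.
have mI : measurable (A `&` B) by exact: measurableI.
rewrite !vE //.
have fA := fin_num_measure nu A mA.
have fB := fin_num_measure nu B mB.
have fU := fin_num_measure nu _ mU.
have fI := fin_num_measure nu _ mI.
have key : (fine (nu (A `|` B)) + fine (nu (A `&` B)) = fine (nu A) + fine (nu B))%R.
  apply: EFin_inj; rewrite !EFinD !fineK // measureUfinl //; last first.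
    by rewrite -ge0_fin_numE.
  by rewrite subeK // fin_numD fA fB.
have qa : (fine (nu (A `&` B)) <= fine (nu A))%R.
  by apply: fine_le => //; apply: le_measure; rewrite ?inE //; exact: subIsetl.
have qb : (fine (nu (A `&` B)) <= fine (nu B))%R.
  by apply: fine_le => //; apply: le_measure; rewrite ?inE //; exact: subIsetr.
have p0 := fine_ge0 (measure_ge0 nu (A `|` B)).
have q0 := fine_ge0 (measure_ge0 nu (A `&` B)).
have a0 := fine_ge0 (measure_ge0 nu A).
have b0 := fine_ge0 (measure_ge0 nu B).
rewrite /phi -!ge0_integralD //; try (by move=> z _; apply: min_ge0); try exact: mmin.
apply: ge0_le_integral => //.
- by move=> z _; apply: adde_ge0; apply: min_ge0.
- by apply: emeasurable_funD; exact: mmin.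
- by apply: emeasurable_funD; exact: mmin.
- by move=> z _; rewrite -!EFinD lee_fin; apply: min_concave.
Qed.

End main.
Section parts34.
Context d (T : measurableType d) (R : realType).
Local Notation Leb := (@lebesgue_measure R).

Lemma mono_emeas2 (D : set R) (mD : measurable D) (k : R -> \bar R) :
  (forall z, k z \is a fin_num) -> (forall x y, (x <= y)%R -> k y <= k x) ->
  measurable_fun D k.
Proof.
move=> kf kn.
rewrite (_ : k = fun z => (fine (k z))%:E); last by apply/funext => z; rewrite fineK.
by apply: mono_emeas => // x y xy; apply: fine_le => //; exact: kn.
Qed.

Lemma part4 (nu mu mu' : {finite_measure set T -> \bar R}) :
  mu `<< nu -> mu' `<< nu -> Fdist nu mu' = Fdist nu mu ->
  forall A, measurable A -> mu' A <= v_mu nu mu A.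
Proof.
move=> numu mu'nu F A mA.
have gg z : gr nu mu' z = gr nu mu z.
  by apply: EFin_inj; rewrite -Fdist_gE // -Fdist_gE // F.
rewrite (mu_layer mu'nu mA) (vE numu mA).
apply: ge0_le_integral => //.
- apply: mono_emeas2 => //.
    move=> z; apply: fin_num_measure; apply: measurableI => //; exact: mlt.
  move=> x y xy; apply: le_measure; rewrite ?inE; try (apply: measurableI => //; exact: mlt).
  by move=> w [Aw yw]; split => //=; apply: le_lt_trans xy yw.
- exact: mmin.
- move=> z _; rewrite EFin_min -gg -gE //.
  rewrite fineK; last exact: fin_num_measure.
  rewrite le_min; apply/andP; split; apply: le_measure; rewrite ?inE //;
    try (apply: measurableI => //; exact: mlt); try exact: mlt;
    try exact: subIsetr; try exact: subIsetl.
Qed.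

Lemma part3 (nu mu mu' : {finite_measure set T -> \bar R}) :
  mu `<< nu -> mu' `<< nu -> Fdist nu mu' = Fdist nu mu ->
  forall f : T -> R, measurable_fun setT f -> (forall w, (0 <= f w)%R) ->
  \int[mu']_w (f w)%:E <= choquet (v_mu nu mu) f.
Proof.
move=> numu mu'nu F f mf f0.
have mS z : measurable [set w | (z < f w)%R].
  by have := mf measurableT _ (measurable_itv `]z, +oo[); rewrite setTI preimage_itvoy.
have Sdec x y : (x <= y)%R -> [set w | (y < f w)%R] `<=` [set w | (x < f w)%R].
  by move=> xy w /=; apply: le_lt_trans.
rewrite layer_cake // /choquet.
apply: ge0_le_integral => //.
- apply: mono_emeas2 => //.
    by move=> z; apply: fin_num_measure; rewrite setTI.
  by move=> x y xy; apply: le_measure; rewrite ?inE ?setTI //; exact: Sdec.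
- apply: mono_emeas2 => //.
    by move=> z; rewrite (vE numu (mS z)); apply: (phi_fin numu); apply: fine_ge0; exact: measure_ge0.
  by move=> x y xy; apply: v_nondecr => //; exact: Sdec.
- by move=> z _; rewrite setTI; apply: part4.
Qed.

End parts34.
Lemma bigcup_ltS (X : Type) (F : nat -> set X) n :
  \bigcup_(i in [set i | (i < n.+1)%N]) F i =
  \bigcup_(i in [set i | (i < n)%N]) F i `|` F n.
Proof.
apply/seteqP; split => x.
  move=> [i /= ilt Fi]; move: ilt; rewrite ltnS leq_eqVlt => /orP[/eqP Ein|ilt].
    by right; rewrite -Ein.
  by left; exists i.
case=> [[i /= ilt Fi]|Fn]; first by exists i => //=; exact: ltnW.
by exists n => //=.
Qed.

Lemma fin_add d' (R : realType) (X : measurableType d') (M : {measure set X -> \bar R})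
    (F : nat -> set X) n :
  (forall i, (i < n)%N -> measurable (F i)) ->
  (forall k, (k < n)%N -> (\bigcup_(i in [set i | (i < k)%N]) F i) `&` F k = set0) ->
  M (\bigcup_(i in [set i | (i < n)%N]) F i) = \sum_(0 <= i < n) M (F i).
Proof.
elim: n => [|n IH] mF H.
  rewrite big_geq // (_ : \bigcup_(i in _) _ = set0) ?measure0 //.
  by apply/seteqP; split => x // [i] /=; rewrite ltn0.
rewrite bigcup_ltS measureU //; last 3 first.
- by apply: bigcup_measurable => k /= kn; apply: mF; exact: ltnW.
- exact: mF.
- exact: H.
rewrite big_nat_recr //= -IH //.
- by move=> k kn; apply: mF; exact: ltnW.
- by move=> k kn; apply: H; exact: ltnW.
Qed.
Section rho_sec.
Context d (T : measurableType d) (R : realType).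
Variables (nu mu : {finite_measure set T -> \bar R}).
Hypothesis numu : mu `<< nu.
Local Notation Leb := (@lebesgue_measure R).

Definition rho (X : set R) : \bar R :=
  \int[Leb]_(z in `[0%R, +oo[%classic) Leb (X `&` `[0%R, gr nu mu z[%classic).

Lemma mrho_int (X : set R) : measurable X ->
  measurable_fun (`[0%R, +oo[%classic : set R) (fun z => Leb (X `&` `[0%R, gr nu mu z[%classic)).
Proof.
move=> mX; apply: mono_emeas2 => //.
  move=> z; rewrite ge0_fin_numE //.
  apply: (@le_lt_trans _ _ (Leb `[0%R, gr nu mu z[%classic)).
    by apply: le_measure; rewrite ?inE //; try exact: measurableI; exact: subIsetr.
  rewrite lebesgue_measure_itv /=.
  by case: ifP => _; rewrite ?ltry ?lt0y // -EFinD ltry.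
move=> x y xy; apply: le_measure; rewrite ?inE; try exact: measurableI.
move=> s [Xs /= sI]; split => //; move: sI.
rewrite !in_itv /= => /andP[s0 sy].
by rewrite s0 (lt_le_trans sy) // gr_ni.
Qed.

Lemma rho0 : rho set0 = 0.
Proof. by rewrite /rho (eq_integral (cst 0)) ?integral0 // => z _; rewrite set0I measure0. Qed.

Lemma rho_ge0 X : 0 <= rho X.
Proof. by apply: integral_ge0 => z _; exact: measure_ge0. Qed.

Lemma rho_sigma : semi_sigma_additive rho.
Proof.
move=> F mF tF mUF.
rewrite [X in _ --> X](_ : _ = \int[Leb]_(z in `[0%R, +oo[%classic)
    (\sum_(n <oo) Leb (F n `&` `[0%R, gr nu mu z[%classic))); last first.
  apply: eq_integral => z _; rewrite setI_bigcupl; apply/esym/cvg_lim => //.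
  apply: measure_semi_sigma_additive.
  - by move=> n; apply: measurableI => //; exact: mF.
  - by apply: trivIset_setIr.
  - by rewrite -setI_bigcupl; exact: measurableI.
apply/cvg_closeP; split.
  by apply: is_cvg_nneseries => n _ _; apply: integral_ge0 => z _; exact: measure_ge0.
rewrite closeE // integral_nneseries // => n; first exact: mrho_int.
Qed.

HB.instance Definition _ := isMeasure.Build _ _ _ rho rho0 rho_ge0 rho_sigma.

Lemma leb_itv_inter (a b c : R) : (0 <= a)%R -> (a <= b)%R -> (0 <= c)%R ->
  Leb (`]a, b]%classic `&` `[0%R, c[%classic) = (Num.min c b - Num.min c a)%:E.
Proof.
move=> a0 ab c0.
have [ca|ac] := leP c a.
  rewrite min_l ?(le_trans ca ab) // subrr (_ : _ `&` _ = set0) ?measure0 //.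
  apply/seteqP; split => s //; case=> /= h1 h2; move: h1 h2.
  rewrite !in_itv /= => /andP[a_s _] /andP[_ sc].
  lra.
have [cb|bc] := leP c b.
  rewrite (_ : _ `&` _ = `]a, c[%classic).
    by rewrite lebesgue_measure_itv /= lte_fin ac -EFinD.
  apply/seteqP; split => s /=.
    case=> /= h1 h2; move: h1 h2; rewrite !in_itv /= => /andP[-> _] /andP[_ ->] //.
  move=> /= h; move: h.
 rewrite !in_itv /= => /andP[a_s sc]; split; apply/andP; split; lra.
rewrite (_ : _ `&` _ = `]a, b]%classic).
  rewrite lebesgue_measure_itv /= lte_fin.
  case: ifPn => [_|]; first by rewrite -EFinD.
  rewrite -leNgt => ba; have -> : b = a by apply/eqP; rewrite eq_le ba ab.
  by rewrite subrr.
apply/seteqP; split => s /=.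
  by case=> /= h1 h2; move: h1 h2; rewrite !in_itv /= => /andP[-> ->].
move=> /= h; move: h; rewrite !in_itv /= => /andP[a_s sb]; split; apply/andP; split; lra.
Qed.

Lemma rho_itv a b : (0 <= a)%R -> (a <= b)%R ->
  rho `]a, b]%classic = phi nu mu b - phi nu mu a.
Proof.
move=> a0 ab.
have E : phi nu mu b = phi nu mu a + rho `]a, b]%classic.
  rewrite /phi /rho -ge0_integralD //.
    apply: eq_integral => z _; rewrite leb_itv_inter //; last exact: gr_ge0.
    by rewrite -EFinD addrC subrK.
  - by move=> z _; exact: min_ge0.
  - exact: mmin.
  - exact: mrho_int.
by rewrite E [phi nu mu a + _]addeC addeK //; apply: phi_fin.
Qed.

Lemma rho_abs X : measurable X -> Leb X = 0 -> rho X = 0.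
Proof.
move=> mX X0; rewrite /rho (eq_integral (cst 0)) ?integral0 // => z _.
apply/eqP; rewrite eq_le measure_ge0 andbT -X0 /=.
by apply: le_measure; rewrite ?inE //; try exact: measurableI; exact: subIsetl.
Qed.

Section chain.
Variable I : set (set T).
Hypothesis hI : chain_class I.

Let IM : I `<=` measurable. Proof. by case: hI. Qed.
Let Ich : forall A B, I A -> I B -> A `<=` B \/ B `<=` A. Proof. by case: hI. Qed.
Let I0 : I set0. Proof. by case: hI. Qed.
Let IT : I setT. Proof. by case: hI. Qed.

Local Notation nr E := (fine (nu E)).

Lemma nr_ge0 E : (0 <= nr E)%R.
Proof. exact/fine_ge0/measure_ge0. Qed.

Lemma nr_le E E' : measurable E -> measurable E' -> E `<=` E' -> (nr E <= nr E')%R.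
Proof.
move=> mE mE' EE'; apply: fine_le; try exact: fin_num_measure.
by apply: le_measure; rewrite ?inE.
Qed.

Definition Nset (A : set T) : set R := [set s | [/\ (0 < s)%R, (s <= nr setT)%R &
  forall E E', I E -> I E' -> (nr E < s)%R -> (s <= nr E')%R ->
    exists w, [/\ E' w, ~ E w & A w]]].

Definition Ival (C D : nat -> set T) i : set R := `]nr (D i), nr (C i)]%classic.
Definition Bn (D : nat -> set T) n : set T := if n is k.+1 then D k else setT.

Lemma repr_le m n C D : (m <= n)%N -> chain_repr I n C D -> chain_repr I m C D.
Proof.
move=> mn [h1 h2]; split => i ilt.
  by apply: h1; exact: leq_trans ilt mn.
by apply: h2; exact: leq_trans ilt mn.
Qed.

Lemma repr_I n C D i : chain_repr I n C D -> (i < n)%N -> [/\ I (C i), I (D i) & D i `<=` C i].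
Proof. by case=> h1 _ /h1 [? []]. Qed.

Lemma Bn_I n C D : chain_repr I n C D -> I (Bn D n).
Proof. by case: n => [//|k] rep; have [] := repr_I rep (ltnSn k). Qed.

Lemma C_B n C D : chain_repr I n.+1 C D -> C n `<=` Bn D n.
Proof. by case: n => [//|k] [_ h2] /=; apply: h2. Qed.

Lemma nest n C D : chain_repr I n C D -> forall i, (i < n)%N -> Bn D n `<=` D i.
Proof.
elim: n => [|n IH] rep i; first by rewrite ltn0.
rewrite ltnS leq_eqVlt => /orP[/eqP ->|ilt] //=.
have rep' := repr_le (leqnSn n) rep.
apply: subset_trans (IH rep' i ilt).
apply: subset_trans (C_B rep).
by have [] := repr_I rep (ltnSn n).
Qed.

Lemma inv n C D : chain_repr I n C D -> forall w, Bn D n w -> ~ chain_union n C D w.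
Proof.
elim: n => [|n IH] rep w Bw; first by case=> i /=; rewrite ltn0.
rewrite /chain_union bigcup_ltS => -[Uw|[Cw nDw]]; last exact: nDw.
have rep' := repr_le (leqnSn n) rep.
apply: (IH rep' w) Uw; apply: (C_B rep).
by have [_ _] := repr_I rep (ltnSn n); apply.
Qed.

Lemma Gind n C D : chain_repr I n C D -> forall s, (0 < s)%R -> (s <= nr setT)%R ->
  (forall i, (i < n)%N -> ~ Ival C D i s) ->
  (s <= nr (Bn D n))%R \/ (exists E E', [/\ I E, I E', (nr E < s)%R & (s <= nr E')%R] /\
    ((forall w, E' w -> ~ E w -> ~ chain_union n C D w) /\ Bn D n `<=` E)).
Proof.
elim: n => [|n IH] rep s s0 sT nI; first by left.
have rep' := repr_le (leqnSn n) rep.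
have [ICn IDn DC] := repr_I rep (ltnSn n).
have CB := C_B rep.
have IB := Bn_I rep'.
have nIn := nI n (ltnSn n).
have := IH rep' s s0 sT (fun i ilt => nI i (ltnW ilt)).
case => [sB|[E [E' [[IE IE' Es sE'] [disj BE]]]]].
- have [sD|Ds] := leP s (nr (D n)); first by left.
  right; exists (C n), (Bn D n); split; first split => //.
    rewrite ltNge; apply/negP => sC; apply: nIn; rewrite /Ival /= in_itv /= Ds sC.
    by [].
  split; last by [].
  move=> w Bw nCw; rewrite /chain_union bigcup_ltS => -[Uw|[Cw _]] //.
  exact: (inv rep' Bw Uw).
- right; exists E, E'; split; first by split.
  split.
    move=> w E'w nEw; rewrite /chain_union bigcup_ltS => -[Uw|[Cw _]].
      exact: disj E'w nEw Uw.
    by apply: nEw; apply: BE; apply: CB.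
  by move=> w Dw; apply: BE; apply: CB; apply: DC.
Qed.

Lemma contra_nr s P Q : measurable P -> measurable Q -> P `<=` Q ->
  (nr Q < s)%R -> (s <= nr P)%R -> False.
Proof.
move=> mP mQ PQ Qs sP; have := nr_le mP mQ PQ => h.
by have := lt_le_trans (le_lt_trans h Qs) sP; rewrite ltxx.
Qed.

Lemma REP n C D : chain_repr I n C D ->
  Nset (chain_union n C D) = \bigcup_(i in [set i | (i < n)%N]) Ival C D i.
Proof.
move=> rep; apply/seteqP; split => s.
- case=> s0 sT HN; apply: contrapT => nU.
  have nI : forall i, (i < n)%N -> ~ Ival C D i s by move=> i ilt Is; apply: nU; exists i.
  case: (Gind rep s0 sT nI) => [sB|[E [E' [[IE IE' Es sE'] [disj _]]]]].
  + have [|w [Bw _ Uw]] := HN set0 (Bn D n) I0 (Bn_I rep) _ sB.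
      by rewrite measure0.
    exact: inv rep w Bw Uw.
  + have [w [E'w nEw Uw]] := HN E E' IE IE' Es sE'.
    exact: disj w E'w nEw Uw.
- case=> i /= ilt; rewrite /Ival /= in_itv /= => /andP[Ds sC].
  have [ICi IDi DC] := repr_I rep ilt.
  split.
  + exact: le_lt_trans (nr_ge0 _) Ds.
  + by apply: le_trans sC _; apply: nr_le => //; exact: IM.
  + move=> E E' IE IE' Es sE'; apply: contrapT => nw.
    have H : forall w, E' w -> C i w -> E w \/ D i w.
      move=> w E'w Cw; case: (pselect (E w)) => [|nE]; first by left.
      case: (pselect (D i w)) => [|nD]; first by right.
      by exfalso; apply: nw; exists w; split => //; exists i.
    have mE := IM IE; have mE' := IM IE'; have mC := IM ICi; have mD := IM IDi.
    case: (Ich IE IDi) => [EDi|DiE]; case: (Ich IE' ICi) => [E'Ci|CiE'].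
    * apply: (@contra_nr s E' (D i)) => // w E'w.
      by case: (H w E'w (E'Ci w E'w)) => // /EDi.
    * apply: (@contra_nr s (C i) (D i)) => // w Cw.
      by case: (H w (CiE' w Cw) Cw) => // /EDi.
    * apply: (@contra_nr s E' E) => // w E'w.
      by case: (H w E'w (E'Ci w E'w)) => // /DiE.
    * apply: (@contra_nr s (C i) E) => // w Cw.
      by case: (H w (CiE' w Cw) Cw) => // /DiE.
Qed.

Lemma mJ A : chain_algebra I A -> measurable A.
Proof.
case=> n [C [D [rep ->]]]; apply: bigcup_measurable => i ilt.
have [ICi IDi _] := repr_I rep ilt.
by apply: measurableI; [exact: IM|apply: measurableC; exact: IM].
Qed.

Lemma mNset A : chain_algebra I A -> measurable (Nset A).
Proof.
case=> n [C [D [rep ->]]]; rewrite REP //.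
by apply: bigcup_measurable => i _; exact: measurable_itv.
Qed.

Lemma Ival_disj n C D : chain_repr I n C D -> forall k, (k < n)%N ->
  (\bigcup_(i in [set i | (i < k)%N]) Ival C D i) `&` Ival C D k = set0.
Proof.
move=> rep k kn; apply/seteqP; split => s // [[i /= ik]].
rewrite /Ival /= !in_itv /= => /andP[Ds _] /andP[_ sC].
have repk := repr_le kn rep.
have repk' := repr_le (ltnW kn) rep.
have CD : C k `<=` D i.
  apply: subset_trans (nest repk' ik); exact: C_B repk.
have [ICk _ _] := repr_I rep kn.
have [_ IDi _] := repr_I rep (ltn_trans ik kn).
have := nr_le (IM ICk) (IM IDi) CD => h.
by have := lt_le_trans (le_lt_trans h Ds) sC; rewrite ltxx.
Qed.

Lemma piece_disj n C D : chain_repr I n C D -> forall k, (k < n)%N ->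
  (\bigcup_(i in [set i | (i < k)%N]) (C i `&` ~` D i)) `&` (C k `&` ~` D k) = set0.
Proof.
move=> rep k kn; apply/seteqP; split => w // [Uw [Ckw _]].
have repk := repr_le kn rep.
have repk' := repr_le (ltnW kn) rep.
exact: (inv repk' (C_B repk Ckw) Uw).
Qed.

Lemma sum_rho n C D : chain_repr I n C D ->
  rho (Nset (chain_union n C D)) = \sum_(0 <= i < n) (v_mu nu mu (C i) - v_mu nu mu (D i)).
Proof.
move=> rep; rewrite REP // fin_add //; last 2 first.
- by move=> i _; exact: measurable_itv.
- exact: Ival_disj.
apply: eq_big_nat => i /andP[_ ilt].
have [ICi IDi DC] := repr_I rep ilt.
rewrite /Ival /=.
rewrite rho_itv ?nr_ge0 //; last by apply: nr_le => //; exact: IM.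
by rewrite !vE //; exact: IM.
Qed.

Lemma leb_N n C D : chain_repr I n C D ->
  Leb (Nset (chain_union n C D)) = nu (chain_union n C D).
Proof.
move=> rep; rewrite REP // fin_add //; last 2 first.
- by move=> i _; exact: measurable_itv.
- exact: Ival_disj.
rewrite /chain_union fin_add //; last 2 first.
- move=> i ilt; have [ICi IDi _] := repr_I rep ilt.
  by apply: measurableI; [exact: IM|apply: measurableC; exact: IM].
- exact: piece_disj.
apply: eq_big_nat => i /andP[_ ilt].
have [ICi IDi DC] := repr_I rep ilt.
have mC := IM ICi; have mD := IM IDi.
rewrite -setDE measureD //; last by rewrite -ge0_fin_numE //; exact: fin_num_measure.
rewrite setIidr // /Ival /=.
have L := lebesgue_measure_itv `]fine (nu (D i)), fine (nu (C i))].
etransitivity; first exact: L.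
have eC : nu (C i) = (fine (nu (C i)))%:E by rewrite fineK //; exact: fin_num_measure.
have eD : nu (D i) = (fine (nu (D i)))%:E by rewrite fineK //; exact: fin_num_measure.
rewrite [in RHS]eC [in RHS]eD /= lte_fin.
have DCle := nr_le mD mC DC.
case: ifPn => [_|]; first by [].
rewrite -leNgt => h.
have -> : fine (nu (C i)) = fine (nu (D i)) by apply/eqP; rewrite eq_le h DCle.
by rewrite subee.
Qed.

Lemma v_cont_I : exists m, is_mu_v_I (v_mu nu mu) I m /\ sigma_additive_on (chain_algebra I) m.
Proof.
exists (fun A => rho (Nset A)); split.
  by move=> n C D rep; exact: sum_rho.
move=> A JA tA JU /=.
have mA k := mJ (JA k).
have NAs X : chain_algebra I X -> Leb (Nset X) = nu X.
  by case=> n [C [D [rep ->]]]; exact: leb_N.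
have mN k := mNset (JA k).
have tN : trivIset setT (fun k => Nset (A k)).
  move=> j k _ _ [s [Nj Nk]].
  case: (JA j) => n [C [D [rep Aj]]].
  move: Nj; rewrite Aj REP // => -[i /= ilt]; rewrite /Ival /= in_itv /= => /andP[Ds sC].
  have [ICi IDi _] := repr_I rep ilt.
  case: Nk => _ _ /(_ (D i) (C i) IDi ICi Ds sC) [w [Cw nDw Akw]].
  apply: tA => //; exists w; split => //; rewrite Aj; exists i => //.
pose U' := \bigcup_k Nset (A k).
have mU' : measurable U' by apply: bigcup_measurable => k _; exact: mN.
have sub : U' `<=` Nset (\bigcup_k A k).
  move=> s [k _ [s0 sT H]]; split => // E E' IE IE' Es sE'.
  have [w [E'w nEw Akw]] := H E E' IE IE' Es sE'.
  by exists w; split => //; exists k.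
have NU := NAs _ JU.
have fU : nu (\bigcup_k A k) \is a fin_num := fin_num_measure nu _ (mJ JU).
have LU' : Leb U' = nu (\bigcup_k A k).
  rewrite /U' measure_bigcup //; last by move=> k _; exact: mN.
  rewrite [RHS]measure_bigcup //; try (by move=> k _; exact: mA).
  by apply: eq_eseriesr => k _; exact: NAs.
have L0 : Leb (Nset (\bigcup_k A k) `\` U') = 0.
  have fN : Leb (Nset (\bigcup_k A k)) < +oo by rewrite NU -ge0_fin_numE.
  rewrite measureD //; try exact: mNset JU.
  rewrite setIidr //=.
  by rewrite NU LU' subee.
have R0 := rho_abs (measurableD (mNset JU) mU') L0.
rewrite (measureDI rho (mNset JU) mU') /= R0 add0e setIidr //.
exact: (measure_semi_sigma_additive (fun k => Nset (A k)) mN tN mU').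
Qed.

End chain.

End rho_sec.


Theorem theorem13 (d : measure_display) (T : measurableType d) (R : realType)
  (nu mu : {finite_measure set T -> \bar R}) :
  (exists I : set (set T), chain_class I) ->
  mu `<< nu ->
  [/\ (nondecreasing_sf (v_mu nu mu) /\ continuous_sf (v_mu nu mu) /\
       submodular_sf (v_mu nu mu) /\ v_mu nu mu set0 = 0),
      (forall y : R, (0 <= y)%R ->
         v_mu nu mu [set w | y%:E < RN nu mu w] =
         mu [set w | y%:E < RN nu mu w]),
      (forall f : T -> R, measurable_fun setT f -> (forall w, (0 <= f w)%R) ->
         choquet (v_mu nu mu) f >=
         ereal_sup [set \int[mu']_w (f w)%:E |
           mu' in [set mu' : {finite_measure set T -> \bar R} |
                    mu' `<< nu /\ Fdist nu mu' = Fdist nu mu]]) &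
      (forall A, measurable A ->
         v_mu nu mu A >=
         ereal_sup [set mu' A |
           mu' in [set mu' : {finite_measure set T -> \bar R} |
                    mu' `<< nu /\ Fdist nu mu' = Fdist nu mu]])].
Proof.
move=> _ numu; split.
- split; first exact: v_nondecr numu.
  split; first by move=> I hI; have H := v_cont_I numu hI; exact H.
  split; first exact: v_submod numu.
  exact: v_set0 numu.
- by move=> y y0; have H := part2 numu y0; exact H.
- move=> f mf f0; apply: ge_ereal_sup => _ [mu' [mu'nu F] <-].
  by have H := part3 numu mu'nu F mf f0; exact H.
- move=> A mA; apply: ge_ereal_sup => _ [mu' [mu'nu F] <-].
  by have H := part4 numu mu'nu F mA; exact H.
Qed.
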